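(* Let $G=(V,E)$ be a finite graph with special vertex $i$, symmetric edge weights $w_E$ (with $w_E(u,v)=0$ for $uv\notin E$) and vertex weights $w_V$ (nonnegative, not identically zero). Assume $G$ and $G-i$ are each positively connected. Let $f_i$ be a solution of $$\min_{\|g\|_w=1,\ g(i)=0}\ \sum_{jk\in E} w_E(j,k)\,(g(k)-g(j))^2,$$ with sign chosen so that $f_i$ is positive on $V\setminus\{i\}$. Then for every $u\in V\setminus\{i\}$ there exists $u'\in N(u)$ (possibly $u'=i$) with $f_i(u')\le f_i(u)$. Moreover, if $w_V(u)>0$, such $u'$ can be chosen with $f_i(u')<f_i(u)$.
   Context: $\|g\|_w=\sqrt{\sum_{u\in V}w_V(u)g(u)^2}$; each edge is counted once. A weighted graph is positively connected if any two vertices are joined by a path of positive-weight edges; $G-i$ is $G$ with $i$ deleted. Edges of weight zero are regarded as deleted (they do not affect the optimization problem), so $N(u)$ is the set of vertices joined to $u$ by an edge of positive weight. A solution that is positive at some vertex is positive on all of $V\setminus\{i\}$, and the paper always takes this sign. *)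

(* Defs.v *)
From mathcomp Require Import all_boot all_order all_algebra.
Set Implicit Arguments. Unset Strict Implicit. Unset Printing Implicit Defensive.
Import Order.TTheory GRing.Theory Num.Theory.
Local Open Scope ring_scope.

Section Defs.
Variables (R : rcfType) (V : finType).

Definition pos_adj (wE : V -> V -> R) : rel V := fun x y => 0 < wE x y.

Definition nbr (wE : V -> V -> R) (u v : V) : bool := (v != u) && (0 < wE u v).

Definition pos_connected_on (wE : V -> V -> R) (A : pred V) : Prop :=
  forall x y, A x -> A y ->
    exists p : seq V, [/\ path (pos_adj wE) x p, last x p = y & all A p].

Definition pos_connected (wE : V -> V -> R) : Prop :=
  pos_connected_on wE predT.

Definition pos_connected_minus (wE : V -> V -> R) (i : V) : Prop :=
  pos_connected_on wE (fun x => x != i).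

Definition wnorm (wV : V -> R) (g : V -> R) : R :=
  Num.sqrt (\sum_(u : V) wV u * g u ^+ 2).

(* sum over edges jk, each edge counted once: half the sum over ordered
   pairs (weights are symmetric and loops contribute 0) *)
Definition energy (wE : V -> V -> R) (g : V -> R) : R :=
  2^-1 * \sum_(j : V) \sum_(k : V) wE j k * (g k - g j) ^+ 2.

Definition is_solution (wE : V -> V -> R) (wV : V -> R) (i : V) (f : V -> R) : Prop :=
  [/\ wnorm wV f = 1, f i = 0 &
      forall g : V -> R, wnorm wV g = 1 -> g i = 0 -> energy wE f <= energy wE g].

End Defs.

(* Main.v *)
Require Import Defs.
From mathcomp Require Import all_boot all_order all_algebra ring lra.
Import Order.TTheory GRing.Theory Num.Theory.
Local Open Scope ring_scope.
Set Implicit Arguments. Unset Strict Implicit.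

Section Aux.
Variables (R : rcfType) (V : finType) (wE : V -> V -> R) (wV : V -> R).
Hypothesis wE_sym : forall u v, wE u v = wE v u.
Hypothesis wE_ge0 : forall u v, 0 <= wE u v.
Hypothesis wV_ge0 : forall u, 0 <= wV u.

Definition Nw (g : V -> R) := \sum_(u : V) wV u * g u ^+ 2.
Definition upd (f : V -> R) (u : V) (x : R) := fun v => if v == u then x else f v.

Lemma Nw_ge0 g : 0 <= Nw g.
Proof. by apply: sumr_ge0 => v _; rewrite mulr_ge0 // sqr_ge0. Qed.

Lemma energy_ge0 g : 0 <= energy wE g.
Proof.
rewrite /energy mulr_ge0 ?invr_ge0 ?ler0n //.
by apply: sumr_ge0 => j _; apply: sumr_ge0 => k _; rewrite mulr_ge0 // sqr_ge0.
Qed.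

Lemma energy_scale c g : energy wE (fun v => c * g v) = c ^+ 2 * energy wE g.
Proof.
rewrite /energy mulrCA; congr (_ * _); rewrite mulr_sumr; apply: eq_bigr => j _.
by rewrite mulr_sumr; apply: eq_bigr => k _; ring.
Qed.

Lemma rayleigh i f : is_solution wE wV i f ->
  forall g, g i = 0 -> 0 < Nw g -> energy wE f * Nw g <= energy wE g.
Proof.
case=> _ _ hmin g gi Npos.
set s := Num.sqrt (Nw g).
have s2 : s ^+ 2 = Nw g := sqr_sqrtr (ltW Npos).
have sn0 : s != 0.
  apply/eqP => s0; move: s2; rewrite s0 expr2 mulr0 => h.
  by rewrite -h ltxx in Npos.
pose h v := s^-1 * g v.
have Nh : Nw h = 1.
  transitivity (s^-1 ^+ 2 * Nw g).
    by rewrite /Nw mulr_sumr; apply: eq_bigr => v _; rewrite /h; ring.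
  by rewrite -s2 exprVn mulVf // expf_neq0.
have wh : wnorm wV h = 1 by rewrite /wnorm -/(Nw h) Nh sqrtr1.
have hi : h i = 0 by rewrite /h gi mulr0.
have Eh := hmin h wh hi.
rewrite /h energy_scale in Eh.
rewrite -s2.
have -> : energy wE g = (s^-1 ^+ 2 * energy wE g) * s ^+ 2.
  by rewrite mulrAC exprVn mulVf ?expf_neq0 // mul1r.
by apply: ler_wpM2r => //; apply: sqr_ge0.
Qed.

Lemma path_nbr u p : path (pos_adj wE) u p -> last u p != u -> exists v, nbr wE u v.
Proof.
elim: p => [|x p IH] /=; first by rewrite eqxx.
move=> /andP[hux hp] hl; case: (eqVneq x u) => [exu|nxu].
  by subst x; exact: IH.
by exists x; rewrite /nbr nxu.
Qed.

Lemma path_const (g : V -> R) x p : (forall j k, pos_adj wE j k -> g k = g j) ->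
  path (pos_adj wE) x p -> g (last x p) = g x.
Proof.
move=> H; elim: p x => [|y p IH] x //= /andP[hxy hp].
by rewrite IH // (H _ _ hxy).
Qed.

Lemma energy0_const (g : V -> R) : energy wE g = 0 -> forall j k, pos_adj wE j k -> g k = g j.
Proof.
move=> E0 j k hjk.
have S0 : \sum_(j : V) \sum_(k : V) wE j k * (g k - g j) ^+ 2 = 0.
  move: E0; rewrite /energy => /eqP; rewrite mulf_eq0 invr_eq0 pnatr_eq0 /=.
  by move/eqP.
have hge : forall j k, 0 <= wE j k * (g k - g j) ^+ 2.
  by move=> a b; rewrite mulr_ge0 // sqr_ge0.
have Sj : \sum_(k : V) wE j k * (g k - g j) ^+ 2 = 0.
  apply: (psumr_eq0P _ S0) => // a _; exact: sumr_ge0 => b _.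
have : wE j k * (g k - g j) ^+ 2 = 0.
  exact: (psumr_eq0P _ Sj).

move/eqP; rewrite mulf_eq0 (gt_eqF hjk) /= sqrf_eq0 subr_eq0.
by move/eqP.
Qed.

Lemma Nw_upd f u x : Nw (upd f u x) - Nw f = wV u * (x ^+ 2 - f u ^+ 2).
Proof.
rewrite /Nw -sumrB (bigD1 u) //= big1 => [|v /negbTE hv]; rewrite /upd ?eqxx ?hv /=.
  by ring.
by rewrite subrr.
Qed.


Lemma sum_lt (I : finType) (F G : I -> R) x :
  (forall i, F i <= G i) -> F x < G x -> \sum_i F i < \sum_i G i.
Proof.
move=> hle hlt; rewrite (bigD1 x) //= [X in _ < X](bigD1 x) //=.
by apply: ltr_leD => //; apply: ler_sum => j _.
Qed.

Lemma term1 f u x j k : (forall v, nbr wE u v -> x <= f v) -> f u <= x ->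
  wE j k * (upd f u x k - upd f u x j) ^+ 2 <= wE j k * (f k - f j) ^+ 2.
Proof.
move=> H hx; rewrite /upd.
case: (eqVneq j u) => [->|hj]; case: (eqVneq k u) => [->|hk] //=.
- by rewrite !subrr.
- have := wE_ge0 u k; rewrite le0r => /orP[/eqP->|pos]; first by rewrite !mul0r.
  have hk' : nbr wE u k by rewrite /nbr hk pos.
  have := H k hk' => hxk.
  apply: ler_wpM2l; first exact: ltW. nra.
- rewrite wE_sym.
  have := wE_ge0 u j; rewrite le0r => /orP[/eqP->|pos]; first by rewrite !mul0r.
  have hj' : nbr wE u j by rewrite /nbr hj pos.
  have := H j hj' => hxj.
  apply: ler_wpM2l; first exact: ltW. nra.
Qed.

Lemma term2 f u t j k : 0 <= t -> (forall v, nbr wE u v -> f u <= f v) ->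
  wE j k * (upd f u (f u + t) k - upd f u (f u + t) j) ^+ 2
    <= wE j k * (f k - f j) ^+ 2 + t ^+ 2 * wE j k.
Proof.
move=> ht H; rewrite /upd.
case: (eqVneq j u) => [->|hj]; case: (eqVneq k u) => [->|hk] //=.
- by rewrite !subrr expr2 !mulr0 add0r mulr_ge0 // sqr_ge0.
- have := wE_ge0 u k; rewrite le0r => /orP[/eqP->|pos]; first by rewrite !mul0r !mulr0 addr0.
  have hk' : nbr wE u k by rewrite /nbr hk pos.
  have := H k hk' => hxk.
  rewrite [t ^+ 2 * _]mulrC -mulrDr.
  apply: ler_wpM2l; first exact: ltW. nra.
- rewrite wE_sym.
  have := wE_ge0 u j; rewrite le0r => /orP[/eqP->|pos]; first by rewrite !mul0r !mulr0 addr0.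
  have hj' : nbr wE u j by rewrite /nbr hj pos.
  have := H j hj' => hxj.
  rewrite [t ^+ 2 * _]mulrC -mulrDr.
  apply: ler_wpM2l; first exact: ltW. nra.
- by rewrite lerDl mulr_ge0 // sqr_ge0.
Qed.

End Aux.

Theorem theorem8 (R : rcfType) (V : finType) (i : V)
    (wE : V -> V -> R) (wV : V -> R)
    (wE_sym : forall u v, wE u v = wE v u)
    (wE_ge0 : forall u v, 0 <= wE u v)
    (wV_ge0 : forall u, 0 <= wV u)
    (wV_nz : exists u, wV u != 0)
    (conG : pos_connected wE)
    (conGi : pos_connected_minus wE i)
    (f : V -> R)
    (f_sol : is_solution wE wV i f)
    (f_pos : forall u, u != i -> 0 < f u) :
  forall u, u != i ->
    (exists u', nbr wE u u' /\ f u' <= f u) /\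
    (0 < wV u -> exists u', nbr wE u u' /\ f u' < f u).
Proof.
move=> u hu.
have hiu : i != u by rewrite eq_sym.
have fi : f i = 0 by case: f_sol.
have Nf : Nw wV f = 1.
  case: f_sol => wf _ _.
  have wf' : Num.sqrt (Nw wV f) = 1 := wf.
  by rewrite -(sqr_sqrtr (Nw_ge0 wV_ge0 f)) wf' expr1n.
have [w hw] : exists w, nbr wE u w.
  have [p [hp hl _]] := conG u i isT isT.
  by apply: (path_nbr hp); rewrite hl.
have lam0 := energy_ge0 wE_ge0 f.
have fu0 := f_pos u hu.
case: (arg_minP f hw) => w0 hw0 hmin.
have w0u : w0 != u by move: hw0; rewrite /nbr => /andP[].
have pw0 : 0 < wE u w0 by move: hw0; rewrite /nbr => /andP[].
split.
  case: (lerP (f w0) (f u)) => h1; first by exists w0.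
  exfalso.
  set g := upd f u (f w0).
  have gi : g i = 0 by rewrite /g /upd (negbTE hiu) fi.
  have NG : 1 <= Nw wV g.
    rewrite -Nf -subr_ge0 Nw_upd; apply: mulr_ge0 => //.
    rewrite subr_ge0; nra.
  have EG : energy wE g < energy wE f.
    rewrite /energy ltr_pM2l ?invr_gt0 ?ltr0n //.
    apply: (@sum_lt _ V _ _ u); first move=> j.
      by apply: ler_sum => k _; apply: term1 => //; exact: ltW.
    apply: (@sum_lt _ V _ _ w0); first move=> k.
      by apply: term1 => //; exact: ltW.
    rewrite /g /upd eqxx (negbTE w0u) subrr expr2 mulr0 mulr0.
    by apply: mulr_gt0 => //; rewrite mulr_gt0 // subr_gt0.
  have := rayleigh f_sol gi (lt_le_trans ltr01 NG).
  have : energy wE f <= energy wE f * Nw wV g by rewrite ler_peMr.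
  move: EG; set L := energy wE f; set P := L * _; set Eg := energy wE g.
  move=> *; lra.
move=> hwV.
case: (ltrP (f w0) (f u)) => h1; first by exists w0.
exfalso.
have hnb : forall v, nbr wE u v -> f u <= f v.
  by move=> v hv; apply: le_trans h1 (hmin v hv).
have lpos : 0 < energy wE f.
  rewrite lt0r lam0 andbT; apply/eqP => E0.
  have hc := energy0_const wE_ge0 E0.
  have [p [hp hl _]] := conG i u isT isT.
  have := path_const hc hp; rewrite hl fi => fu.
  by rewrite fu ltxx in fu0.
set L := energy wE f.
set W := \sum_(j : V) \sum_(k : V) wE j k.
have W0 : 0 <= W by apply: sumr_ge0 => j _; apply: sumr_ge0.
set c := wV u * f u.
have c0 : 0 < c by rewrite mulr_gt0.
set t := L * c / (W + 1).
have W1 : 0 < W + 1 by rewrite ltr_wpDl.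
have t0 : 0 < t by rewrite divr_gt0 // mulr_gt0.
have tW : t * (W + 1) = L * c by rewrite /t divfK // gt_eqF.
set g := upd f u (f u + t).
have gi : g i = 0 by rewrite /g /upd (negbTE hiu) fi.
have hN := Nw_upd wV f u (f u + t).
rewrite -/g Nf in hN.
have hN2 : 2 * t * c <= Nw wV g - 1.
  have -> : Nw wV g - 1 = wV u * ((f u + t) ^+ 2 - f u ^+ 2) by exact: hN.
  rewrite /c.
  have -> : wV u * ((f u + t) ^+ 2 - f u ^+ 2) = 2 * t * (wV u * f u) + wV u * t ^+ 2 by ring.
  by rewrite lerDl mulr_ge0 // sqr_ge0.
have tc : 0 < 2 * t * c by apply: mulr_gt0 => //; apply: mulr_gt0.
have NG : 0 < Nw wV g by lra.
have EG : energy wE g <= L + 2^-1 * (t ^+ 2 * W).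
  rewrite /L /energy -mulrDr; apply: ler_wpM2l; first by rewrite invr_ge0 ler0n.
  have -> : \sum_(j : V) \sum_(k : V) wE j k * (f k - f j) ^+ 2 + t ^+ 2 * W =
     \sum_(j : V) \sum_(k : V) (wE j k * (f k - f j) ^+ 2 + t ^+ 2 * wE j k).
    rewrite /W mulr_sumr -big_split; apply: eq_bigr => j _.
    by rewrite mulr_sumr -big_split.
  apply: ler_sum => j _; apply: ler_sum => k _.
  by apply: term2 => //; apply: ltW.
have hR := rayleigh f_sol gi NG.
have h3 : L * (2 * t * c) <= 2^-1 * (t ^+ 2 * W).
  have := ler_wpM2l (ltW lpos) hN2; rewrite -/L in hR * => h; rewrite mulrBr mulr1 in h; lra.
have h4 : 2 * (L * c) <= 2^-1 * (t * W).
  have h3' : t * (2 * (L * c)) <= t * (2^-1 * (t * W)).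
    move: h3; congr (_ <= _); ring.
  by rewrite ler_pM2l in h3'.
have h5 : t * W <= L * c by rewrite -tW ler_pM2l // lerDl.
have Lc : 0 < L * c by rewrite mulr_gt0.
lra.
Qed.
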